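(* Let $\mathcal M$ be a special local Moufang set with basis $(0,\infty)$, let $\tau$ be a $\mu$-map, let $n\ge1$, and let $x\in X\setminus\overline\infty$ be such that $x\cdot k$ is a unit for all $1\le k\le n$. Then: (i) there is a unique $y\in X\setminus\overline\infty$ with $y\cdot n=x$, denoted $x\cdot\tfrac1n$; (ii) $(x\cdot n)\tau=x\tau\cdot\tfrac1n$ and $(x\cdot\tfrac1n)\tau=x\tau\cdot n$ (in particular $x\tau\cdot k$ is a unit for $1\le k\le n$); (iii) if $z\sim x$, then $z\cdot k$ is a unit for all $1\le k\le n$ and $x\cdot\tfrac1n\sim z\cdot\tfrac1n$.
   Context: Group actions are right actions; $g^h=h^{-1}gh$; permutations composed left to right. For $(X,\sim)$, $\overline x$ is the class of $x$, $\overline X$ the set of classes, $\mathrm{Sym}(X,\sim)$ the bijections $g$ with $x\sim y\iff xg\sim yg$, $\overline U$ the induced group on $\overline X$. A local Moufang set is $(X,\sim)$ with $|\overline X|>2$ and subgroups $U_x\le\mathrm{Sym}(X,\sim)$ ($x\in X$) with: (LM0) $x\sim y\Rightarrow\overline{U_x}=\overline{U_y}$; (LM1) $U_x$ fixes $x$ and is sharply transitive on $X\setminus\overline x$; (LM1') $\overline{U_x}$ fixes $\overline x$ and is sharply transitive on $\overline X\setminus\{\overline x\}$; (LM2) $U_x^g=U_{xg}$ for all $x$ and all $g\in\langle U_y\rangle$. Fix a basis $(0,\infty)$, $0\not\sim\infty$. For $x\not\sim\infty$: $\alpha_x$ is the unique element of $U_\infty$ with $0\alpha_x=x$, $-x:=0\alpha_x^{-1}$,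 and $x\cdot k:=0\alpha_x^k$ for $k\ge1$. A unit is $x$ with $x\not\sim0,\infty$; $\mu_x$ is the unique element of $U_0\alpha_xU_0$ interchanging $0$ and $\infty$; a $\mu$-map is any $\mu_e$, $e$ a unit. $\mathcal M$ is special if $\big(-(x\tau^{-1})\big)\tau=-x$ for all units $x$ and some (equivalently every) $\mu$-map $\tau$. *)

(* Defs.v *)
(* A permutation g acting on the right is represented as a function g : X -> X,
   with  "x g"  written  g x ;  the product  g h  (first g then h) is
   fun z => h (g z). *)
From Stdlib Require Import ClassicalEpsilon FunctionalExtensionality PeanoNat.
Set Implicit Arguments.

Section LMS.
Context {X : Type}.

Definition in_Sym (eqv : X -> X -> Prop) (g : X -> X) : Prop :=
  (exists h : X -> X, (forall z, h (g z) = z) /\ (forall z, g (h z) = z)) /\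
  (forall x y, eqv x y <-> eqv (g x) (g y)).

Definition is_subgroup_Sym (eqv : X -> X -> Prop) (P : (X -> X) -> Prop) : Prop :=
  (forall g, P g -> in_Sym eqv g) /\
  P (fun z => z) /\
  (forall g h, P g -> P h -> P (fun z => h (g z))) /\
  (forall g, P g -> exists h, P h /\ (forall z, h (g z) = z) /\ (forall z, g (h z) = z)).

(* every element of the induced group of P on classes is induced by some element of Q *)
Definition bar_incl (eqv : X -> X -> Prop) (P Q : (X -> X) -> Prop) : Prop :=
  forall g, P g -> exists h, Q h /\ forall z, eqv (g z) (h z).

(* the group generated by all U_y  (each U_y is closed under inverses) *)
Inductive gen (U : X -> (X -> X) -> Prop) : (X -> X) -> Prop :=
| gen_id : gen U (fun z => z)
| gen_mul : forall y u g, U y u -> gen U g -> gen U (fun z => u (g z)).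

Definition is_local_moufang (eqv : X -> X -> Prop) (U : X -> (X -> X) -> Prop) : Prop :=
  ((forall x, eqv x x) /\ (forall x y, eqv x y -> eqv y x) /\
   (forall x y z, eqv x y -> eqv y z -> eqv x z)) /\
  (exists a b c, ~ eqv a b /\ ~ eqv a c /\ ~ eqv b c) /\
  (forall x, is_subgroup_Sym eqv (U x)) /\
  (forall x y, eqv x y -> bar_incl eqv (U x) (U y) /\ bar_incl eqv (U y) (U x)) /\
  (forall x, (forall g, U x g -> g x = x) /\
     (forall y z, ~ eqv y x -> ~ eqv z x -> exists! g, U x g /\ g y = z)) /\
  (forall x, (forall g y, U x g -> eqv y x -> eqv (g y) x) /\
     (forall y z, ~ eqv y x -> ~ eqv z x -> exists g, U x g /\ eqv (g y) z) /\
     (forall g h y, U x g -> U x h -> ~ eqv y x -> eqv (g y) (h y) ->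
        forall w, eqv (g w) (h w))) /\
  (* (LM2): U_x^g = U_{xg}, where  g^{-1} u g  acts as  z |-> g (u (g^{-1} z)) *)
  (forall x g ginv, gen U g -> (forall z, ginv (g z) = z) -> (forall z, g (ginv z) = z) ->
     forall v, U (g x) v <-> exists u, U x u /\ v = (fun z => g (u (ginv z)))).

Definition finv (f : X -> X) : X -> X :=
  fun z => epsilon (inhabits z) (fun y => f y = z).

Variables (eqv : X -> X -> Prop) (U : X -> (X -> X) -> Prop) (zero inf : X).

Definition alpha (x : X) : X -> X :=
  epsilon (inhabits (fun z : X => z)) (fun a => U inf a /\ a zero = x).

Definition negp (x : X) : X := finv (alpha x) zero.

Definition mulk (x : X) (k : nat) : X := Nat.iter k (alpha x) zero.

Definition is_unit (x : X) : Prop := ~ eqv x zero /\ ~ eqv x inf.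

Definition mu (x : X) : X -> X :=
  epsilon (inhabits (fun z : X => z))
    (fun m => (exists u1 u2, U zero u1 /\ U zero u2 /\ m = (fun z => u2 (alpha x (u1 z))))
              /\ m zero = inf /\ m inf = zero).

Definition is_mu_map (tau : X -> X) : Prop := exists e, is_unit e /\ tau = mu e.

Definition special : Prop :=
  exists tau, is_mu_map tau /\
    forall x, is_unit x -> tau (negp (finv tau x)) = negp x.

Definition fracn (x : X) (n : nat) : X :=
  epsilon (inhabits x) (fun y => ~ eqv y inf /\ mulk y n = x).

End LMS.

(* Main.v *)
Require Import Defs.
From Stdlib Require Import ClassicalEpsilon PeanoNat FunctionalExtensionality Lia.

Section Main.
Context {X : Type} (eqv : X -> X -> Prop) (U : X -> (X -> X) -> Prop) (zero inf : X).
Hypothesis HM : is_local_moufang eqv U.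
Hypothesis H0 : ~ eqv zero inf.

Lemma erf x : eqv x x. Proof. destruct HM as [[h _] _]. apply h. Qed.
Lemma esy x y : eqv x y -> eqv y x. Proof. destruct HM as [[_ [h _]] _]. apply h. Qed.
Lemma etr x y z : eqv x y -> eqv y z -> eqv x z. Proof. destruct HM as [[_ [_ h]] _]. apply h. Qed.

Lemma H0' : ~ eqv inf zero. Proof. intro h; apply H0, esy, h. Qed.

Lemma sub p : is_subgroup_Sym eqv (U p). Proof. destruct HM as [_ [_ [h _]]]. apply h. Qed.

Lemma U_fix p g : U p g -> g p = p.
Proof. destruct HM as [_ [_ [_ [_ [h _]]]]]. apply (proj1 (h p)). Qed.

Lemma U_ex p y z : ~ eqv y p -> ~ eqv z p -> exists! g, U p g /\ g y = z.
Proof. destruct HM as [_ [_ [_ [_ [h _]]]]]. apply (proj2 (h p)). Qed.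

Lemma U_sharp p g h y : U p g -> U p h -> ~ eqv y p -> eqv (g y) (h y) ->
  forall w, eqv (g w) (h w).
Proof. destruct HM as [_ [_ [_ [_ [_ [h' _]]]]]]. apply (proj2 (proj2 (h' p))). Qed.

Lemma lm2 x g ginv : gen U g -> (forall z, ginv (g z) = z) -> (forall z, g (ginv z) = z) ->
  forall v, U (g x) v <-> exists u, U x u /\ v = (fun z => g (u (ginv z))).
Proof. destruct HM as [_ [_ [_ [_ [_ [_ h]]]]]]. apply h. Qed.

Lemma U_sym p g : U p g -> forall x y, eqv x y <-> eqv (g x) (g y).
Proof. intro Hg. destruct (sub p) as [h _]. apply (proj2 (h g Hg)). Qed.

Lemma U_id p : U p (fun z => z).
Proof. destruct (sub p) as [_ [h _]]. exact h. Qed.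

Lemma U_comp p g h : U p g -> U p h -> U p (fun z => h (g z)).
Proof. destruct (sub p) as [_ [_ [h' _]]]. apply h'. Qed.

Lemma U_iter p g k : U p g -> U p (Nat.iter k g).
Proof.
  intro Hg. induction k as [|k IH].
  - exact (U_id p).
  - change (U p (fun z => g (Nat.iter k g z))). apply U_comp; assumption.
Qed.

Lemma finv_eq (f h : X -> X) : (forall z, h (f z) = z) -> (forall z, f (h z) = z) ->
  forall z, finv f z = h z.
Proof.
  intros H1 H2 z. unfold finv.
  assert (E : exists y, f y = z) by (exists (h z); apply H2).
  pose proof (epsilon_spec (inhabits z) (fun y => f y = z) E) as Hs.
  simpl in Hs. rewrite <- Hs at 2. rewrite H1. reflexivity.
Qed.

Lemma U_inv p g : U p g ->
  U p (finv g) /\ (forall z, finv g (g z) = z) /\ (forall z, g (finv g z) = z).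
Proof.
  intro Hg. destruct (sub p) as [_ [_ [_ h]]].
  destruct (h g Hg) as [k [Hk [H1 H2]]].
  assert (E : finv g = k) by (apply functional_extensionality; apply finv_eq; assumption).
  rewrite E. auto.
Qed.

Lemma U_nsim p g y : U p g -> ~ eqv y p -> ~ eqv (g y) p.
Proof.
  intros Hg Hy Hc. apply Hy. rewrite <- (U_fix p g Hg) in Hc.
  apply (proj2 (U_sym p g Hg y p)). exact Hc.
Qed.

Lemma U_uniq p g h y : U p g -> U p h -> ~ eqv y p -> g y = h y -> g = h.
Proof.
  intros Hg Hh Hy E.
  destruct (U_ex p y (g y) Hy (U_nsim p g y Hg Hy)) as [k [_ Hu]].
  transitivity k; [symmetry|]; apply Hu; auto.
Qed.

Definition CT (g : X -> X) := forall w, eqv (g w) w.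

Lemma U_ct p g y : U p g -> ~ eqv y p -> eqv (g y) y -> CT g.
Proof. intros Hg Hy E w. exact (U_sharp p g (fun z => z) y Hg (U_id p) Hy E w). Qed.

Lemma CT_iter g k : CT g -> CT (Nat.iter k g).
Proof.
  intros Hg w. induction k as [|k IH].
  - apply erf.
  - simpl. eapply etr; [apply Hg | exact IH].
Qed.

Lemma gen_sym g : gen U g -> forall x y, eqv x y <-> eqv (g x) (g y).
Proof.
  induction 1 as [|y u g Hu Hg IH]; intros a b.
  - tauto.
  - rewrite (IH a b). apply (U_sym y u Hu).
Qed.

Lemma gen_U p u : U p u -> gen U u.
Proof. intro Hu. exact (gen_mul p u Hu (gen_id U)). Qed.

Definition rt p q y : X -> X :=
  epsilon (inhabits (fun z : X => z)) (fun a => U p a /\ a q = y).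

Lemma rt_spec p q y : ~ eqv q p -> ~ eqv y p -> U p (rt p q y) /\ rt p q y q = y.
Proof.
  intros Hq Hy. unfold rt.
  destruct (U_ex p q y Hq Hy) as [g [Hg _]].
  apply (epsilon_spec (inhabits _) (fun a => U p a /\ a q = y)). exists g; exact Hg.
Qed.

Lemma iter_mul (f : X -> X) a b x : Nat.iter (a * b) f x = Nat.iter a (Nat.iter b f) x.
Proof.
  induction a as [|a IH]; [reflexivity|].
  simpl. rewrite Nat.iter_add, IH. reflexivity.
Qed.

Lemma iter_cancel (f g : X -> X) : (forall z, g (f z) = z) ->
  forall k z, Nat.iter k g (Nat.iter k f z) = z.
Proof.
  intros H k. induction k as [|k IH]; intro z; [reflexivity|].
  rewrite Nat.iter_succ_r. rewrite Nat.iter_succ. rewrite H. apply IH.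
Qed.

Lemma rt_iter p q y m : ~ eqv q p -> ~ eqv y p ->
  rt p q (Nat.iter m (rt p q y) q) = Nat.iter m (rt p q y).
Proof.
  intros Hq Hy. destruct (rt_spec p q y Hq Hy) as [Hr _].
  assert (Hm : ~ eqv (Nat.iter m (rt p q y) q) p) by (apply U_nsim; [apply U_iter|]; assumption).
  destruct (rt_spec p q _ Hq Hm) as [Hr2 E2].
  apply (U_uniq p _ _ q Hr2 (U_iter p _ m Hr) Hq). exact E2.
Qed.

Lemma rt_iter2 p q y m j : ~ eqv q p -> ~ eqv y p ->
  Nat.iter j (rt p q (Nat.iter m (rt p q y) q)) q = Nat.iter (j * m) (rt p q y) q.
Proof. intros Hq Hy. rewrite rt_iter by assumption. rewrite iter_mul. reflexivity. Qed.


Definition swap (g : X -> X) := gen U g /\ g zero = inf /\ g inf = zero /\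
  exists ginv, (forall z, ginv (g z) = z) /\ (forall z, g (ginv z) = z).

Lemma transport g ginv p q y : gen U g -> (forall z, ginv (g z) = z) -> (forall z, g (ginv z) = z) ->
  g p = q -> g q = p -> ~ eqv q p -> ~ eqv y p ->
  forall k, g (Nat.iter k (rt p q y) q) = Nat.iter k (rt q p (g y)) p.
Proof.
  intros Hg H1 H2 Hp Hq Hqp Hy.
  destruct (rt_spec p q y Hqp Hy) as [Hr Er].
  set (C := fun z => g (rt p q y (ginv z))).
  assert (HC : U q C).
  { rewrite <- Hp. apply (proj2 (lm2 p g ginv Hg H1 H2 C)). exists (rt p q y). split; auto. }
  assert (Hpq : ~ eqv p q) by (intro h; apply Hqp, esy, h).
  assert (Hgy : ~ eqv (g y) q).
  { intro h. apply Hy. rewrite <- Hp in h. apply (proj2 (gen_sym g Hg y p)). exact h. }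
  destruct (rt_spec q p (g y) Hpq Hgy) as [Hr2 Er2].
  assert (Eq : C = rt q p (g y)).
  { apply (U_uniq q C _ p HC Hr2 Hpq). unfold C. assert (Gi : ginv p = q) by (rewrite <- Hq; apply H1). rewrite Gi, Er, Er2. reflexivity. }
  intro k. induction k as [|k IH]; [exact Hq|].
  simpl. rewrite <- IH. rewrite <- Eq. unfold C. rewrite H1. reflexivity.
Qed.

Lemma swap_unit g x : swap g -> is_unit eqv zero inf x -> is_unit eqv zero inf (g x).
Proof.
  intros [Hg [Hz [Hi _]]] [Ha Hb]. split.
  - intro h. apply Hb. rewrite <- Hi in h. apply (proj2 (gen_sym g Hg x inf)). exact h.
  - intro h. apply Ha. rewrite <- Hz in h. apply (proj2 (gen_sym g Hg x zero)). exact h.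
Qed.

Definition al y := rt inf zero y.
Definition be y := rt zero inf y.
Definition mk y k := Nat.iter k (al y) zero.
Definition dk y k := Nat.iter k (be y) inf.

Lemma mk_eq y k : mulk U zero inf y k = mk y k. Proof. reflexivity. Qed.

Lemma al_spec y : ~ eqv y inf -> U inf (al y) /\ al y zero = y.
Proof. intro h. apply rt_spec; [exact H0 | exact h]. Qed.
Lemma be_spec y : ~ eqv y zero -> U zero (be y) /\ be y inf = y.
Proof. intro h. apply rt_spec; [exact H0' | exact h]. Qed.

Lemma mk_ninf y k : ~ eqv y inf -> ~ eqv (mk y k) inf.
Proof. intro h. apply U_nsim; [apply U_iter, al_spec, h | exact H0]. Qed.
Lemma dk_nzero y k : ~ eqv y zero -> ~ eqv (dk y k) zero.
Proof. intro h. apply U_nsim; [apply U_iter, be_spec, h | exact H0']. Qed.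

Lemma mk_mk y m j : ~ eqv y inf -> mk (mk y m) j = mk y (j * m).
Proof. intro h. apply rt_iter2; [exact H0 | exact h]. Qed.
Lemma dk_dk y m j : ~ eqv y zero -> dk (dk y m) j = dk y (j * m).
Proof. intro h. apply rt_iter2; [exact H0' | exact h]. Qed.
Lemma al_mk y m : ~ eqv y inf -> al (mk y m) = Nat.iter m (al y).
Proof. intro h. apply rt_iter; [exact H0 | exact h]. Qed.
Lemma be_dk y m : ~ eqv y zero -> be (dk y m) = Nat.iter m (be y).
Proof. intro h. apply rt_iter; [exact H0' | exact h]. Qed.

Lemma tr_mk g y k : swap g -> ~ eqv y inf -> g (mk y k) = dk (g y) k.
Proof.
  intros [Hg [Hz [Hi [gi [H1 H2]]]]] Hy.
  apply (transport g gi inf zero y Hg H1 H2 Hi Hz H0 Hy).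
Qed.
Lemma tr_dk g y k : swap g -> ~ eqv y zero -> g (dk y k) = mk (g y) k.
Proof.
  intros [Hg [Hz [Hi [gi [H1 H2]]]]] Hy.
  apply (transport g gi zero inf y Hg H1 H2 Hz Hi H0' Hy).
Qed.

Lemma gen_comp g h : gen U g -> gen U h -> gen U (fun z => h (g z)).
Proof.
  intros Hg Hh. induction Hh as [|y u h Hu Hh IH].
  - exact Hg.
  - exact (gen_mul y u Hu IH).
Qed.


Hypothesis HS : forall c, is_unit eqv zero inf c -> finv (be c) inf = finv (al c) zero.

Definition sc c := fun z => finv (be c) (al c (finv (be c) z)).

Lemma sc_props c : is_unit eqv zero inf c ->
  swap (sc c) /\ forall w, sc c (finv (be c) w) = al c (sc c w).
Proof.
  intros Hc. pose proof Hc as [Hc0 Hci].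
  destruct (be_spec c Hc0) as [Hb Eb].
  destruct (al_spec c Hci) as [Ha Ea].
  destruct (U_inv zero _ Hb) as [Hbi [Bi1 Bi2]].
  destruct (U_inv inf _ Ha) as [Hai [Ai1 Ai2]].
  set (b := be c) in *. set (bi := finv b) in *. set (a := al c) in *. set (ai := finv a) in *.
  set (s := sc c).
  assert (Es : forall z, s z = bi (a (bi z))) by reflexivity.
  set (si := fun z => b (ai (b z))).
  assert (S1 : forall z, si (s z) = z).
  { intro z. rewrite Es. unfold si. rewrite Bi2, Ai1, Bi2. reflexivity. }
  assert (S2 : forall z, s (si z) = z).
  { intro z. rewrite Es. unfold si. rewrite Bi1, Ai2, Bi1. reflexivity. }
  assert (Hgs : gen U s).
  { exact (gen_mul zero bi Hbi (gen_mul inf a Ha (gen_mul zero bi Hbi (gen_id U)))). }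
  assert (Bic : bi c = inf) by (rewrite <- Eb; apply Bi1).
  assert (Sz : s zero = inf).
  { rewrite Es. rewrite (U_fix zero bi Hbi). rewrite Ea. exact Bic. }
  assert (Si : s inf = zero).
  { assert (Bii : bi inf = ai zero) by exact (HS c Hc). rewrite Es, Bii, Ai2. apply (U_fix zero bi Hbi). }
  assert (SIi : si inf = zero) by (rewrite <- Sz; apply S1).
  set (W := fun z => s (bi (si z))).
  set (G := fun z => s (a (si z))).
  assert (HW : U inf W).
  { rewrite <- Sz. apply (proj2 (lm2 zero s si Hgs S1 S2 W)). exists bi; split; auto. }
  assert (HG : U zero G).
  { rewrite <- Si. apply (proj2 (lm2 inf s si Hgs S1 S2 G)). exists a; split; auto. }
  assert (EG : G = bi).
  { apply (U_uniq zero G bi inf HG Hbi H0'). unfold G. rewrite SIi, Ea, Es, Bic.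
    rewrite (U_fix inf a Ha). reflexivity. }
  assert (Id : forall z, s z = W (G (W z))).
  { intro z. unfold W, G. rewrite S1. rewrite S1. rewrite <- Es. rewrite S2. reflexivity. }
  assert (EW : W = a).
  { destruct (U_inv inf W HW) as [_ [Wi1 _]].
    assert (E1 : W (G (W zero)) = W inf) by (rewrite <- Id, Sz; symmetry; apply (U_fix inf W HW)).
    assert (E2 : G (W zero) = inf) by (rewrite <- (Wi1 (G (W zero))), E1; apply Wi1).
    rewrite EG in E2.
    assert (E3 : W zero = c) by (rewrite <- Eb, <- E2; symmetry; apply Bi2).
    apply (U_uniq inf W a zero HW Ha H0). rewrite E3. symmetry; exact Ea. }
  split.
  - split; [exact Hgs | split; [exact Sz | split; [exact Si | exists si; split; assumption]]].
  - intro w. rewrite <- EW. unfold W. rewrite S1. reflexivity.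
Qed.

Lemma sc_iter c : is_unit eqv zero inf c -> forall k, sc c (Nat.iter k (finv (be c)) inf) = mk c k.
Proof.
  intros Hc k. destruct (sc_props c Hc) as [[_ [_ [Si _]]] Hb].
  induction k as [|k IH]; [exact Si|].
  simpl. rewrite Hb, IH. reflexivity.
Qed.

Lemma Z2 c : is_unit eqv zero inf c -> forall k, eqv (mk c k) zero <-> eqv (dk c k) inf.
Proof.
  intros Hc k. destruct (sc_props c Hc) as [[Hg [_ [Si _]]] _].
  rewrite <- (sc_iter c Hc k). rewrite <- Si at 1. rewrite <- (gen_sym _ Hg).
  pose proof Hc as [Hc0 _].
  destruct (be_spec c Hc0) as [Hb _].
  destruct (U_inv zero _ Hb) as [Hbi [Bi1 Bi2]].
  pose proof (iter_cancel _ _ Bi1 k) as C1.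
  pose proof (iter_cancel _ _ Bi2 k) as C2.
  unfold dk. split; intro h.
  - pose proof (U_ct zero _ inf (U_iter zero _ k Hbi) H0' h) as ct.
    specialize (ct (Nat.iter k (be c) inf)). rewrite C1 in ct. apply esy, ct.
  - pose proof (U_ct zero _ inf (U_iter zero _ k Hb) H0' h) as ct.
    specialize (ct (Nat.iter k (finv (be c)) inf)). rewrite C2 in ct. apply esy, ct.
Qed.


Hypothesis Hsw : exists g, swap g.

Definition Cond c n := ~ eqv c inf /\ forall k, 1 <= k <= n -> is_unit eqv zero inf (mk c k).

Lemma mk1 c : ~ eqv c inf -> mk c 1 = c.
Proof. intro h. apply (al_spec c h). Qed.
Lemma dk1 c : ~ eqv c zero -> dk c 1 = c.
Proof. intro h. apply (be_spec c h). Qed.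

Lemma Cond_unit c n : 1 <= n -> Cond c n -> is_unit eqv zero inf c.
Proof. intros Hn [Hc H]. rewrite <- (mk1 c Hc). apply H. lia. Qed.

Lemma Cond_le c n m : m <= n -> Cond c n -> Cond c m.
Proof. intros Hm [Hc H]. split; [exact Hc|]. intros k Hk. apply H. lia. Qed.

Lemma dk_unit c k : is_unit eqv zero inf c -> ~ eqv (mk c k) zero -> is_unit eqv zero inf (dk c k).
Proof.
  intros Hc Hk. split.
  - apply dk_nzero, Hc.
  - intro h. apply Hk. apply (proj2 (Z2 c Hc k)). exact h.
Qed.

Lemma Lp_of_L m c : (forall y, Cond y m -> mk (dk y m) m = y) -> 1 <= m -> Cond c m ->
  dk (mk c m) m = c.
Proof.
  intros HL Hm Hc. destruct Hsw as [g Hg].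
  pose proof Hg as [_ [_ [_ [gi [G1 G2]]]]].
  pose proof (Cond_unit c m Hm Hc) as Hu.
  assert (Hgc : Cond (g c) m).
  { split; [apply (swap_unit g c Hg Hu)|].
    intros k Hk. rewrite <- (tr_dk g c k Hg (proj1 Hu)). apply (swap_unit g _ Hg).
    apply dk_unit; [exact Hu|]. apply (proj2 Hc k Hk). }
  pose proof (HL _ Hgc) as E.
  rewrite <- (tr_mk g c m Hg (proj2 Hu)) in E.
  assert (Hmz : ~ eqv (mk c m) zero) by (apply (proj2 Hc m); lia).
  rewrite <- (tr_dk g _ m Hg Hmz) in E.
  rewrite <- (G1 (dk (mk c m) m)), E. apply G1.
Qed.

Lemma Sat m c : 1 <= m -> Cond c m -> dk (mk c m) m = c ->
  forall j, eqv (mk c (m * j)) zero -> eqv (mk c j) zero.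
Proof.
  intros Hm Hc Hd j Hj.
  pose proof (Cond_unit c m Hm Hc) as Hu.
  assert (He : is_unit eqv zero inf (mk c m)) by (apply (proj2 Hc); lia).
  assert (E1 : eqv (mk (mk c m) j) zero) by (rewrite mk_mk by apply Hu; rewrite Nat.mul_comm; exact Hj).
  apply (proj1 (Z2 _ He j)) in E1.
  destruct (be_spec (mk c m) (proj1 He)) as [Hb _].
  pose proof (U_ct zero _ inf (U_iter zero _ j Hb) H0' E1) as ct.
  apply (proj2 (Z2 c Hu j)).
  rewrite <- Hd. rewrite dk_dk by apply He. rewrite Nat.mul_comm. unfold dk. rewrite iter_mul.
  apply (CT_iter _ m ct).
Qed.

Lemma Lmain : forall N n, 1 <= n <= N -> forall c, Cond c n -> mk (dk c n) n = c.
Proof.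
  induction N as [|N IH]; intros n Hn c Hc; [lia|].
  destruct (Nat.le_gt_cases n N) as [Hle|Hgt]; [apply IH; [lia|exact Hc]|].
  assert (En : n = S N) by lia. subst n. clear Hgt.
  pose proof (Cond_unit c (S N) (proj1 Hn) Hc) as Hu. pose proof Hu as [Hc0 Hci].
  destruct (Nat.eq_dec N 0) as [HN|HN].
  { subst N. rewrite (dk1 c Hc0). apply (mk1 c Hci). }
  assert (HL : forall m, 1 <= m <= N -> forall y, Cond y m -> mk (dk y m) m = y).
  { intros m Hm y Hy. apply (IH m Hm y Hy). }
  assert (HLp : forall m, 1 <= m <= N -> dk (mk c m) m = c).
  { intros m Hm. apply (Lp_of_L m c (HL m Hm)); [lia|]. apply (Cond_le c (S N)); [lia|exact Hc]. }
  assert (HSat : forall m, 1 <= m <= N -> forall j, eqv (mk c (m * j)) zero -> eqv (mk c j) zero).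
  { intros m Hm. apply (Sat m c); [lia| apply (Cond_le c (S N)); [lia|exact Hc] | apply HLp; lia]. }
  set (e := mk c N).
  assert (He : is_unit eqv zero inf e) by (apply (proj2 Hc); lia).
  assert (Hce : dk e N = c) by (apply HLp; lia).
  assert (Hbc : be c = Nat.iter N (be e)) by (rewrite <- Hce; apply be_dk, He).
  set (v := dk e (S N)).
  assert (Q : forall k, 1 <= k <= N -> ~ eqv (dk e (k * S N)) inf).
  { intros k Hk h. apply (proj2 (Z2 e He _)) in h.
    unfold e in h. rewrite mk_mk in h by exact Hci.
    assert (h2 : eqv (mk c (N * (k * S N))) zero) by (rewrite Nat.mul_comm; exact h).
    apply (HSat N) in h2; [|lia].
    apply (HSat k) in h2; [|lia].
    refine (proj1 (proj2 Hc (S N) _) h2). lia. }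
  assert (Hv0 : ~ eqv v zero) by (apply dk_nzero, He).
  assert (Hvi : ~ eqv v inf).
  { rewrite <- (dk1 v Hv0). unfold v. rewrite dk_dk by apply He. apply Q; lia. }
  assert (Hvu : is_unit eqv zero inf v) by (split; assumption).
  assert (HCv : Cond v N).
  { split; [exact Hvi|]. intros k Hk. split; [|apply mk_ninf, Hvi].
    intro h. apply (proj1 (Z2 v Hvu k)) in h. revert h. unfold v. rewrite dk_dk by apply He. apply Q; exact Hk. }
  assert (Ev : mk (dk v N) N = v) by (apply (HL N); [lia|exact HCv]).
  set (d := dk c (S N)).
  assert (Ed : dk v N = d).
  { unfold v, d. rewrite dk_dk by apply He. rewrite <- Hce. rewrite dk_dk by apply He.
    rewrite Nat.mul_comm. reflexivity. }
  rewrite Ed in Ev.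
  assert (Hd : is_unit eqv zero inf d).
  { apply dk_unit; [exact Hu|]. apply (proj2 Hc (S N)); lia. }
  destruct (be_spec c Hc0) as [Hb Eb].
  destruct (U_inv zero _ Hb) as [Hbi [Bi1 Bi2]].
  set (bi := finv (be c)) in *.
  set (P := Nat.iter (S N) bi inf).
  assert (Ebd : be d = Nat.iter (S N) (be c)) by (apply be_dk, Hc0).
  assert (EP : be d P = inf) by (rewrite Ebd; apply iter_cancel; exact Bi2).
  destruct (be_spec d (proj1 Hd)) as [Hbd _].
  destruct (U_inv zero _ Hbd) as [_ [Bd1 _]].
  assert (Pn : finv (al d) zero = P).
  { rewrite <- (HS d Hd). rewrite <- EP. apply Bd1. }
  pose proof (sc_iter c Hu N) as Es. unfold sc in Es. fold bi in Es.
  change (bi (al c P) = e) in Es.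
  assert (Ecp : al c P = v).
  { rewrite <- (Bi2 (al c P)), Es. rewrite Hbc.
    destruct (be_spec e (proj1 He)) as [_ Ee]. transitivity (Nat.iter N (be e) (be e inf)); [rewrite Ee; reflexivity|].
    unfold v, dk. rewrite Nat.iter_succ_r. reflexivity. }
  destruct (al_spec d (proj2 Hd)) as [Had Ead].
  destruct (U_inv inf _ Had) as [Hadi [_ Ad2]].
  assert (EdP : al d P = zero) by (rewrite <- Pn; apply Ad2).
  assert (Eit : Nat.iter (S N) (al d) P = v).
  { rewrite Nat.iter_succ_r, EdP. exact Ev. }
  assert (HPi : ~ eqv P inf) by (rewrite <- Pn; apply U_nsim; [exact Hadi | exact H0]).
  destruct (al_spec c Hci) as [Hac Eac].
  assert (EE : al c = Nat.iter (S N) (al d)).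
  { apply (U_uniq inf _ _ P Hac (U_iter inf _ _ Had) HPi). rewrite Ecp, Eit. reflexivity. }
  unfold mk. fold d. rewrite <- EE. exact Eac.
Qed.


Lemma Lfin n c : 1 <= n -> Cond c n -> mk (dk c n) n = c.
Proof. intros Hn Hc. apply (Lmain n n); [lia|exact Hc]. Qed.

Lemma Lpfin n c : 1 <= n -> Cond c n -> dk (mk c n) n = c.
Proof. intros Hn Hc. apply (Lp_of_L n c); [intros y Hy; apply Lfin; assumption | exact Hn | exact Hc]. Qed.

Lemma uniq n x y : 1 <= n -> Cond x n -> ~ eqv y inf -> mk y n = x -> y = dk x n.
Proof.
  intros Hn Hx Hy E.
  assert (Hy' : Cond y n).
  { split; [exact Hy|]. intros k Hk. split; [|apply mk_ninf, Hy].
    intro h. destruct (al_spec y Hy) as [Ha _].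
    pose proof (U_ct inf _ zero (U_iter inf _ k Ha) H0 h) as ct.
    pose proof (CT_iter _ n ct zero) as h2. rewrite <- iter_mul in h2.
    apply (proj1 (proj2 Hx k Hk)). rewrite <- E. rewrite mk_mk by exact Hy.
    rewrite Nat.mul_comm. exact h2. }
  rewrite <- E. symmetry. apply Lpfin; assumption.
Qed.

Lemma frac n x : 1 <= n -> Cond x n -> fracn eqv U zero inf x n = dk x n.
Proof.
  intros Hn Hx. unfold fracn.
  assert (Ex : exists y, ~ eqv y inf /\ mulk U zero inf y n = x).
  { exists (dk x n). split.
    - apply (dk_unit x n (Cond_unit x n Hn Hx)). apply (proj2 Hx n). lia.
    - apply Lfin; assumption. }
  destruct (epsilon_spec (inhabits x) (fun y => ~ eqv y inf /\ mulk U zero inf y n = x) Ex) as [H1 H2].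
  apply uniq; assumption.
Qed.

Lemma mu_swap e : is_unit eqv zero inf e -> swap (mu U zero inf e).
Proof.
  intros [He0 Hei].
  destruct (al_spec e Hei) as [Ha Ea].
  destruct (U_inv inf _ Ha) as [Hai [Ai1 Ai2]].
  set (a := al e) in *.
  set (ne := finv a zero).
  assert (Hne : ~ eqv ne zero).
  { intro h. apply He0. rewrite <- Ea. apply esy.
    apply (proj1 (U_sym inf a Ha ne zero)) in h. unfold ne in h. rewrite Ai2 in h. exact h. }
  destruct (be_spec ne Hne) as [Hu1 Eu1].
  assert (Hinf0 : ~ eqv inf zero) by (exact H0').
  destruct (rt_spec zero e inf He0 Hinf0) as [Hu2 Eu2].
  set (u1 := be ne) in *. set (u2 := rt zero e inf) in *.
  unfold mu.
  set (Pm := fun m : X -> X => (exists u1 u2, U zero u1 /\ U zero u2 /\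
      m = (fun z => u2 (alpha U zero inf e (u1 z)))) /\ m zero = inf /\ m inf = zero).
  assert (Ex : exists m, Pm m).
  { exists (fun z => u2 (a (u1 z))). split; [exists u1, u2; auto|]. split.
    - rewrite (U_fix zero u1 Hu1). rewrite Ea. exact Eu2.
    - rewrite Eu1. unfold ne. rewrite Ai2. apply (U_fix zero u2 Hu2). }
  destruct (epsilon_spec (inhabits (fun z : X => z)) Pm Ex) as [[v1 [v2 [Hv1 [Hv2 Em]]]] [Ez Ei]].
  set (m := epsilon _ Pm) in *.
  change (m = fun z => v2 (a (v1 z))) in Em.
  destruct (U_inv zero _ Hv1) as [_ [V11 V12]].
  destruct (U_inv zero _ Hv2) as [_ [V21 V22]].
  split; [|split; [exact Ez|split; [exact Ei|]]].
  - rewrite Em. exact (gen_mul zero v2 Hv2 (gen_mul inf a Ha (gen_mul zero v1 Hv1 (gen_id U)))).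
  - exists (fun z => finv v1 (finv a (finv v2 z))). rewrite Em. split; intro z.
    + rewrite V21, Ai1, V11. reflexivity.
    + rewrite V12, Ai2, V22. reflexivity.
Qed.

Lemma HS_of_special : special eqv U zero inf ->
  forall c, is_unit eqv zero inf c -> finv (be c) inf = finv (al c) zero.
Proof.
  intros [t [[e' [He' Et]] Ht]] c Hc.
  pose proof (mu_swap e' He') as Hsw0. rewrite <- Et in Hsw0.
  destruct Hsw0 as [Hg [Tz [Ti [ti [T1 T2]]]]].
  assert (Ef : forall z, finv t z = ti z) by (apply finv_eq; assumption).
  set (w := finv t c).
  assert (Tw : t w = c) by (unfold w; rewrite Ef; apply T2).
  assert (Hw : ~ eqv w inf).
  { intro h. apply (proj1 Hc). rewrite <- Tw, <- Ti. apply (proj1 (gen_sym t Hg w inf) h). }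
  destruct (al_spec w Hw) as [Haw Eaw].
  destruct (U_inv inf _ Haw) as [_ [_ Aw2]].
  set (Cj := fun z => t (al w (ti z))).
  assert (HCj : U zero Cj).
  { rewrite <- Ti. apply (proj2 (lm2 inf t ti Hg T1 T2 Cj)). exists (al w). split; auto. }
  destruct (be_spec c (proj1 Hc)) as [Hb Eb].
  assert (Hinf0 : ~ eqv inf zero) by (exact H0').
  assert (ECj : Cj = be c).
  { apply (U_uniq zero _ _ inf HCj Hb Hinf0). unfold Cj.
    assert (ti inf = zero) by (rewrite <- Tz; apply T1). rewrite H, Eaw, Tw, Eb. reflexivity. }
  destruct (U_inv zero _ Hb) as [_ [B1 _]].
  set (nw := finv (al w) zero).
  assert (E1 : be c (t nw) = inf).
  { rewrite <- ECj. unfold Cj. rewrite T1. unfold nw. rewrite Aw2. exact Tz. }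
  rewrite <- E1, B1. apply (Ht c Hc).
Qed.


Lemma iter_sim (g h : X -> X) : (forall w, eqv (g w) (h w)) ->
  (forall a b, eqv a b -> eqv (g a) (g b)) ->
  forall k w, eqv (Nat.iter k g w) (Nat.iter k h w).
Proof.
  intros E Hg k w. induction k as [|k IH]; [apply erf|].
  simpl. eapply etr; [apply Hg, IH | apply E].
Qed.

Lemma final tau n x :
  is_mu_map eqv U zero inf tau ->
  1 <= n ->
  ~ eqv x inf ->
  (forall k, 1 <= k <= n -> is_unit eqv zero inf (mulk U zero inf x k)) ->
  (~ eqv (fracn eqv U zero inf x n) inf /\
   mulk U zero inf (fracn eqv U zero inf x n) n = x /\
   (forall y, ~ eqv y inf -> mulk U zero inf y n = x -> y = fracn eqv U zero inf x n)) /\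
  ((forall k, 1 <= k <= n -> is_unit eqv zero inf (mulk U zero inf (tau x) k)) /\
   tau (mulk U zero inf x n) = fracn eqv U zero inf (tau x) n /\
   tau (fracn eqv U zero inf x n) = mulk U zero inf (tau x) n) /\
  (forall z, eqv z x ->
     (forall k, 1 <= k <= n -> is_unit eqv zero inf (mulk U zero inf z k)) /\
     eqv (fracn eqv U zero inf x n) (fracn eqv U zero inf z n)).
Proof.
  intros [e [He Et]] Hn Hx HC.
  assert (Ht : swap tau) by (rewrite Et; apply mu_swap, He).
  assert (Cx : Cond x n) by (split; assumption).
  pose proof (Cond_unit x n Hn Cx) as Hxu.
  rewrite (frac n x Hn Cx).
  assert (Ctx : Cond (tau x) n).
  { split; [apply (swap_unit tau x Ht Hxu)|].
    intros k Hk. rewrite <- (tr_dk tau x k Ht (proj1 Hxu)). apply (swap_unit tau _ Ht).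
    apply dk_unit; [exact Hxu|]. apply (proj2 Cx k Hk). }
  split; [|split].
  - split; [|split].
    + apply (dk_unit x n Hxu). apply (proj2 Cx n). lia.
    + apply Lfin; assumption.
    + intros y Hy E. apply uniq; assumption.
  - split; [|split].
    + apply (proj2 Ctx).
    + rewrite (frac n (tau x) Hn Ctx). apply tr_mk; [exact Ht | exact Hx].
    + apply tr_dk; [exact Ht | exact (proj1 Hxu)].
  - intros z Hzx.
    assert (Hzi : ~ eqv z inf) by (intro h; apply Hx; eapply etr; [apply esy, Hzx | exact h]).
    assert (Hz0 : ~ eqv z zero) by (intro h; apply (proj1 Hxu); eapply etr; [apply esy, Hzx | exact h]).
    destruct (al_spec z Hzi) as [Haz Eaz]. destruct (al_spec x Hx) as [Hax Eax].
    assert (Sa : forall k, eqv (mk z k) (mk x k)).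
    { intro k. apply iter_sim.
      - apply (U_sharp inf _ _ zero Haz Hax H0). rewrite Eaz, Eax. exact Hzx.
      - intros a b. apply (U_sym inf _ Haz). }
    assert (Cz : Cond z n).
    { split; [exact Hzi|]. intros k Hk. destruct (proj2 Cx k Hk) as [A B]. split.
      - intro h. apply A. eapply etr; [apply esy, Sa | exact h].
      - intro h. apply B. eapply etr; [apply esy, Sa | exact h]. }
    split; [apply (proj2 Cz)|].
    rewrite (frac n z Hn Cz).
    destruct (be_spec z Hz0) as [Hbz Ebz]. destruct (be_spec x (proj1 Hxu)) as [Hbx Ebx].
    apply iter_sim.
    + apply (U_sharp zero _ _ inf Hbx Hbz H0'). rewrite Ebz, Ebx. apply esy, Hzx.
    + intros a b. apply (U_sym zero _ Hbx).
Qed.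

End Main.

Theorem mainTheorem14 (X : Type) (eqv : X -> X -> Prop) (U : X -> (X -> X) -> Prop)
  (zero inf : X) (tau : X -> X) (n : nat) (x : X) :
  is_local_moufang eqv U ->
  ~ eqv zero inf ->
  special eqv U zero inf ->
  is_mu_map eqv U zero inf tau ->
  1 <= n ->
  ~ eqv x inf ->
  (forall k, 1 <= k <= n -> is_unit eqv zero inf (mulk U zero inf x k)) ->
  (* (i) *)
  (~ eqv (fracn eqv U zero inf x n) inf /\
   mulk U zero inf (fracn eqv U zero inf x n) n = x /\
   (forall y, ~ eqv y inf -> mulk U zero inf y n = x -> y = fracn eqv U zero inf x n)) /\
  (* (ii) *)
  ((forall k, 1 <= k <= n -> is_unit eqv zero inf (mulk U zero inf (tau x) k)) /\
   tau (mulk U zero inf x n) = fracn eqv U zero inf (tau x) n /\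
   tau (fracn eqv U zero inf x n) = mulk U zero inf (tau x) n) /\
  (* (iii) *)
  (forall z, eqv z x ->
     (forall k, 1 <= k <= n -> is_unit eqv zero inf (mulk U zero inf z k)) /\
     eqv (fracn eqv U zero inf x n) (fracn eqv U zero inf z n)).
Proof.
  intros HM H0 Hsp Hmu Hn Hx HC.
  assert (HS := HS_of_special eqv U zero inf HM H0 Hsp).
  assert (Hsw : exists g, swap U zero inf g).
  { destruct Hmu as [e [He Et]]. exists tau. rewrite Et. apply (mu_swap eqv U zero inf HM H0 e He). }
  exact (final eqv U zero inf HM H0 HS Hsw tau n x Hmu Hn Hx HC).
Qed.
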